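(* Let $p,q\in\Bbbk^\times$. Then $A(q)\cong A(p)$ if and only if $p=q^{\pm1}$.
   Context: $\Bbbk$ is an algebraically closed field of characteristic zero. Paths are written left to right. Let $Q$ be the quiver with vertices $e_1,e_2$, arrows $a,c:e_1\to e_2$ and $b,d:e_2\to e_1$; for $q\in\Bbbk^\times$, $A(q)=\Bbbk Q/(ab-cd,\ ba-q\,dc)$. *)

(* Defs.v *)
From HB Require Import structures.
From mathcomp Require Import all_boot all_order all_algebra.
Set Implicit Arguments. Unset Strict Implicit. Unset Printing Implicit Defensive.
Import GRing.Theory.
Local Open Scope ring_scope.

(* Quiver Q: vertices e1,e2; arrows a,c : e1 -> e2, b,d : e2 -> e1.
   Paths are written left to right, so the path "a then b" is the product a*b,
   and an arrow x : ei -> ej satisfies x = ei * x * ej. *)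

(* Elements (e1,e2,a,b,c,d) of a K-algebra C satisfy the defining relations
   of A(q) = kQ/(ab - cd, ba - q dc): the relations of the path algebra kQ
   (complete set of orthogonal idempotents, arrows between the right vertices)
   together with ab = cd and ba = q dc. *)
Definition Aq_rels (K : fieldType) (q : K) (C : algType K)
    (e1 e2 a b c d : C) : Prop :=
  [/\ e1 + e2 = 1, e1 * e1 = e1, e2 * e2 = e2, e1 * e2 = 0 & e2 * e1 = 0] /\
  [/\ a = e1 * a * e2, c = e1 * c * e2, b = e2 * b * e1 & d = e2 * d * e1] /\
  (a * b = c * d /\ b * a = q *: (d * c)).

(* (A; e1,e2,a,b,c,d) is a presentation of A(q): the generators satisfy the
   relations and A is universal (initial) among K-algebras with such elements,
   i.e. A is the quotient of the free algebra on the generators (equivalently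
   of kQ) by the ideal generated by the relations. *)
Definition is_Aq (K : fieldType) (q : K) (A : algType K)
    (e1 e2 a b c d : A) : Prop :=
  Aq_rels q e1 e2 a b c d /\
  forall (C : algType K) (x1 x2 xa xb xc xd : C),
    Aq_rels q x1 x2 xa xb xc xd ->
    exists f : {lrmorphism A -> C},
      ([/\ f e1 = x1, f e2 = x2 & f a = xa] /\ [/\ f b = xb, f c = xc & f d = xd])
      /\ forall g : {lrmorphism A -> C},
           ([/\ g e1 = x1, g e2 = x2 & g a = xa] /\ [/\ g b = xb, g c = xc & g d = xd]) ->
           g =1 f.

Definition alg_iso (K : fieldType) (A B : algType K) : Prop :=
  exists f : {lrmorphism A -> B}, bijective f.

(* Main.v *)
Require Import Defs.
From HB Require Import structures.
From mathcomp Require Import all_boot all_order all_algebra.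
From mathcomp Require Import ring.
Import GRing.Theory.
Local Open Scope ring_scope.

Set Implicit Arguments. Unset Strict Implicit.

Record TT (K : fieldType) (p : K) := Mk { s1 : K; s2 : K; xa : K; xc : K; xb : K; xd : K;
  w1 : K; w2 : K; w3 : K; v1 : K; v2 : K; v3 : K }.
Arguments Mk {K p} _ _ _ _ _ _ _ _ _ _ _ _.

Section TDef.
Variables (K : fieldType) (p : K).
Local Notation TT := (TT p).
Local Notation Mk := (@Mk K p).

Definition enc (x : TT) :=
  (s1 x, s2 x, xa x, xc x, xb x, xd x, w1 x, w2 x, w3 x, v1 x, v2 x, v3 x).
Definition dec (t : K*K*K*K*K*K*K*K*K*K*K*K) : TT :=
  let: (a1,a2,a3,a4,a5,a6,a7,a8,a9,a10,a11,a12) := t in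
  Mk a1 a2 a3 a4 a5 a6 a7 a8 a9 a10 a11 a12.
Lemma encK : cancel enc dec. Proof. by case. Qed.
HB.instance Definition _ := Choice.copy TT (can_type encK).

Definition map2T (f : K -> K -> K) (x y : TT) :=
  Mk (f (s1 x) (s1 y)) (f (s2 x) (s2 y)) (f (xa x) (xa y)) (f (xc x) (xc y))
     (f (xb x) (xb y)) (f (xd x) (xd y)) (f (w1 x) (w1 y)) (f (w2 x) (w2 y))
     (f (w3 x) (w3 y)) (f (v1 x) (v1 y)) (f (v2 x) (v2 y)) (f (v3 x) (v3 y)).
Definition mapT (f : K -> K) (x : TT) :=
  Mk (f (s1 x)) (f (s2 x)) (f (xa x)) (f (xc x))
     (f (xb x)) (f (xd x)) (f (w1 x)) (f (w2 x))
     (f (w3 x)) (f (v1 x)) (f (v2 x)) (f (v3 x)).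
Definition zeroT := Mk 0 0 0 0 0 0 0 0 0 0 0 0.
Definition addT := map2T +%R.
Definition oppT := mapT -%R.

Definition scaleT (k : K) := mapT ( *%R k).
Definition mulT (x y : TT) := Mk
  (s1 x * s1 y) (s2 x * s2 y)
  (s1 x * xa y + xa x * s2 y) (s1 x * xc y + xc x * s2 y)
  (s2 x * xb y + xb x * s1 y) (s2 x * xd y + xd x * s1 y)
  (s1 x * w1 y + w1 x * s1 y + xa x * xb y + xc x * xd y)
  (s1 x * w2 y + w2 x * s1 y + xa x * xd y)
  (s1 x * w3 y + w3 x * s1 y + xc x * xb y)
  (s2 x * v1 y + v1 x * s2 y + p * (xb x * xa y) + xd x * xc y)
  (s2 x * v2 y + v2 x * s2 y + xb x * xc y)
  (s2 x * v3 y + v3 x * s2 y + xd x * xa y).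
Definition oneT := Mk 1 1 0 0 0 0 0 0 0 0 0 0.

Ltac unf := rewrite /= ?/addT ?/oppT ?/scaleT ?/mulT ?/map2T ?/mapT ?/zeroT ?/oneT /=.

Lemma addTA : associative addT.
Proof. by move=> [? ? ? ? ? ? ? ? ? ? ? ?] [? ? ? ? ? ? ? ? ? ? ? ?] [? ? ? ? ? ? ? ? ? ? ? ?]; unf; f_equal; ring. Qed.
Lemma addTC : commutative addT.
Proof. by move=> [? ? ? ? ? ? ? ? ? ? ? ?] [? ? ? ? ? ? ? ? ? ? ? ?]; unf; f_equal; ring. Qed.
Lemma add0T : left_id zeroT addT.
Proof. by move=> [? ? ? ? ? ? ? ? ? ? ? ?]; unf; f_equal; ring. Qed.
Lemma addNT : left_inverse zeroT oppT addT.
Proof. by move=> [? ? ? ? ? ? ? ? ? ? ? ?]; unf; f_equal; ring. Qed.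
HB.instance Definition _ := GRing.isZmodule.Build TT addTA addTC add0T addNT.
Lemma addTE (x y : TT) : x + y = addT x y. Proof. by []. Qed.
Lemma zeroTE : (0 : TT) = zeroT. Proof. by []. Qed.
Lemma oppTE (x : TT) : - x = oppT x. Proof. by []. Qed.
Ltac unf1 := rewrite ?addTE ?zeroTE ?oppTE; unf.

Lemma scaleTA a b v : scaleT a (scaleT b v) = scaleT (a * b) v.
Proof. by case: v => *; unf; f_equal; ring. Qed.
Lemma scale1T : left_id 1 scaleT.
Proof. by case => *; unf; f_equal; ring. Qed.
Lemma scaleTDr : right_distributive scaleT +%R.
Proof. by move=> a [? ? ? ? ? ? ? ? ? ? ? ?] [? ? ? ? ? ? ? ? ? ? ? ?]; unf1; f_equal; ring. Qed.
Lemma scaleTDl v : {morph scaleT^~ v: a b / a + b}.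
Proof. by case: v => * a b; unf1; f_equal; ring. Qed.
HB.instance Definition _ := GRing.Zmodule_isLmodule.Build K TT scaleTA scale1T scaleTDr scaleTDl.
Lemma scaleTE k (x : TT) : k *: x = scaleT k x. Proof. by []. Qed.
Ltac unf2 := rewrite ?scaleTE; unf1.

Lemma mulTA : associative mulT.
Proof. by move=> [? ? ? ? ? ? ? ? ? ? ? ?] [? ? ? ? ? ? ? ? ? ? ? ?] [? ? ? ? ? ? ? ? ? ? ? ?]; unf; f_equal; ring. Qed.
Lemma mul1T : left_id oneT mulT.
Proof. by move=> [? ? ? ? ? ? ? ? ? ? ? ?]; unf; f_equal; ring. Qed.
Lemma mulT1 : right_id oneT mulT.
Proof. by move=> [? ? ? ? ? ? ? ? ? ? ? ?]; unf; f_equal; ring. Qed.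
Lemma mulTDl : left_distributive mulT +%R.
Proof. by move=> [? ? ? ? ? ? ? ? ? ? ? ?] [? ? ? ? ? ? ? ? ? ? ? ?] [? ? ? ? ? ? ? ? ? ? ? ?]; unf2; f_equal; ring. Qed.
Lemma mulTDr : right_distributive mulT +%R.
Proof. by move=> [? ? ? ? ? ? ? ? ? ? ? ?] [? ? ? ? ? ? ? ? ? ? ? ?] [? ? ? ? ? ? ? ? ? ? ? ?]; unf2; f_equal; ring. Qed.
Lemma oneT_neq0 : oneT != 0.
Proof. apply/eqP => /(congr1 (@s1 _ _)) /= /eqP; by rewrite oner_eq0. Qed.
HB.instance Definition _ := GRing.Zmodule_isNzRing.Build TT mulTA mul1T mulT1 mulTDl mulTDr oneT_neq0.
Lemma mulTE (x y : TT) : x * y = mulT x y. Proof. by []. Qed.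
Lemma oneTE : (1 : TT) = oneT. Proof. by []. Qed.
Ltac unf3 := rewrite ?mulTE ?oneTE; unf2.

Lemma scaleTAl (a : K) (u v : TT) : a *: (u * v) = (a *: u) * v.
Proof. by case: u => *; case: v => *; unf3; f_equal; ring. Qed.
HB.instance Definition _ := GRing.Lmodule_isLalgebra.Build K TT scaleTAl.
Lemma scaleTAr (a : K) (u v : TT) : a *: (u * v) = u * (a *: v).
Proof. by case: u => *; case: v => *; unf3; f_equal; ring. Qed.
HB.instance Definition _ := GRing.Lalgebra_isAlgebra.Build K TT scaleTAr.

End TDef.


Lemma MkE (K : fieldType) (p : K) (a1 a2 a3 a4 a5 a6 a7 a8 a9 a10 a11 a12 b1 b2 b3 b4 b5 b6 b7 b8 b9 b10 b11 b12 : K) :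
  a1 = b1 -> a2 = b2 -> a3 = b3 -> a4 = b4 -> a5 = b5 -> a6 = b6 -> a7 = b7 -> a8 = b8 ->
  a9 = b9 -> a10 = b10 -> a11 = b11 -> a12 = b12 ->
  Mk a1 a2 a3 a4 a5 a6 a7 a8 a9 a10 a11 a12 = Mk b1 b2 b3 b4 b5 b6 b7 b8 b9 b10 b11 b12 :> TT p.
Proof. by move=> -> -> -> -> -> -> -> -> -> -> -> ->. Qed.

Lemma TT_ext (K : fieldType) (p : K) (x y : TT p) :
  s1 x = s1 y -> s2 x = s2 y -> xa x = xa y -> xc x = xc y -> xb x = xb y -> xd x = xd y ->
  w1 x = w1 y -> w2 x = w2 y -> w3 x = w3 y -> v1 x = v1 y -> v2 x = v2 y -> v3 x = v3 y -> x = y.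
Proof. by case: x; case: y => /= *; apply: MkE. Qed.

Ltac unfT := rewrite ?addTE ?zeroTE ?oppTE ?scaleTE ?mulTE ?oneTE /= ?/addT ?/oppT ?/scaleT ?/mulT ?/map2T ?/mapT ?/zeroT ?/oneT /=.

Section DMaps.
Variables (K : fieldType) (p : K) (la lc be : K).


Definition Lac (t : TT p) := la * xa t + lc * xc t - be * (s1 t - s2 t).
Definition Dac (t : TT p) : TT p := Mk (s1 t) (s2 t) (Lac t) 0 0 0 0 0 0 0 0 0.

Lemma Dac_add : zmod_morphism Dac.
Proof. by move=> [? ? ? ? ? ? ? ? ? ? ? ?] [? ? ? ? ? ? ? ? ? ? ? ?]; rewrite /Dac /Lac; unfT; f_equal; ring. Qed.
Lemma Dac_mul : multiplicative Dac.
Proof. split; last by rewrite /Dac /Lac; unfT; f_equal; ring.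
by move=> [? ? ? ? ? ? ? ? ? ? ? ?] [? ? ? ? ? ? ? ? ? ? ? ?]; rewrite /Dac /Lac; unfT; f_equal; ring. Qed.
Lemma Dac_scale : scalable Dac.
Proof. by move=> k [? ? ? ? ? ? ? ? ? ? ? ?]; rewrite /Dac /Lac; unfT; f_equal; ring. Qed.
HB.instance Definition _ := GRing.isZmodMorphism.Build _ _ Dac Dac_add.
HB.instance Definition _ := GRing.isMultiplicative.Build _ _ Dac Dac_mul.
HB.instance Definition _ := GRing.isScalable.Build _ _ _ _ Dac Dac_scale.

Definition Lbd (t : TT p) := la * xb t + lc * xd t - be * (s2 t - s1 t).
Definition Dbd (t : TT p) : TT p := Mk (s1 t) (s2 t) 0 0 (Lbd t) 0 0 0 0 0 0 0.

Lemma Dbd_add : zmod_morphism Dbd.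
Proof. by move=> [? ? ? ? ? ? ? ? ? ? ? ?] [? ? ? ? ? ? ? ? ? ? ? ?]; rewrite /Dbd /Lbd; unfT; f_equal; ring. Qed.
Lemma Dbd_mul : multiplicative Dbd.
Proof. split; last by rewrite /Dbd /Lbd; unfT; f_equal; ring.
by move=> [? ? ? ? ? ? ? ? ? ? ? ?] [? ? ? ? ? ? ? ? ? ? ? ?]; rewrite /Dbd /Lbd; unfT; f_equal; ring. Qed.
Lemma Dbd_scale : scalable Dbd.
Proof. by move=> k [? ? ? ? ? ? ? ? ? ? ? ?]; rewrite /Dbd /Lbd; unfT; f_equal; ring. Qed.
HB.instance Definition _ := GRing.isZmodMorphism.Build _ _ Dbd Dbd_add.
HB.instance Definition _ := GRing.isMultiplicative.Build _ _ Dbd Dbd_mul.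
HB.instance Definition _ := GRing.isScalable.Build _ _ _ _ Dbd Dbd_scale.
End DMaps.


Section Fin.
Variables (K : fieldType) (p q : K).

Lemma lc2 (c1 c2 : K) {z x1 y1 x2 y2 : K} :
  x1 = y1 -> x2 = y2 -> z = c1 * (x1 - y1) + c2 * (x2 - y2) -> z = 0.
Proof. by move=> -> -> ->; rewrite !subrr !mulr0 addr0. Qed.
Arguments lc2 c1 c2 {z x1 y1 x2 y2}.

Lemma prod0 (x y : K) : x * y = 0 -> x != 0 -> y = 0.
Proof. by move/eqP; rewrite mulf_eq0 => /orP[/eqP->|/eqP //]; rewrite eqxx. Qed.
Lemma prod0' (x y : K) : x * y = 0 -> y != 0 -> x = 0.
Proof. by move/eqP; rewrite mulf_eq0 => /orP[/eqP //|/eqP->]; rewrite eqxx. Qed.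

Lemma inv_of (hq : q != 0) : q * p = 1 -> p = q^-1.
Proof. by move=> h; rewrite -[p](mulKf hq) h mulr1. Qed.

Lemma q1_case (m11 m21 m12 m22 n11 n21 n12 n22 : K)
  (E1 : m11* n21 = m12* n22) (h : (p - 1) * (m11* n11 - m12* n12) = 0)
  (dM : m11* m22 - m12* m21 != 0) (dN : n11* n22 - n12* n21 != 0) : p = 1.
Proof.
move/eqP: h; rewrite mulf_eq0 => /orP[/eqP h|/eqP h'].
  by apply/eqP; rewrite -subr_eq0; apply/eqP.
have h'' : m11 * n11 = m12 * n12 by apply/eqP; rewrite -subr_eq0; apply/eqP.
have a : m11 * (n11* n22 - n12* n21) = 0 by apply: (lc2 n22 (-n12) h'' E1); ring.
have b : m12 * (n11* n22 - n12* n21) = 0 by apply: (lc2 n21 (-n11) h'' E1); ring.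
have a0 := prod0' a dN; have b0 := prod0' b dN.
by move: dM; rewrite a0 b0 !mul0r subrr eqxx.
Qed.

Lemma final1 (m11 m21 m12 m22 n11 n21 n12 n22 : K) (hq : q != 0)
 (E1 : m11* n21 = m12* n22) (E2 : m21* n11 = m22* n12) (E3 : m11* n11 + m21* n21 = m12* n12 + m22* n22)
 (F1 : n11* m21 = q*(n12* m22)) (F2 : n21* m11 = q*(n22* m12))
 (F3 : p*(n11* m11) + n21* m21 = q*(p*(n12* m12) + n22* m22))
 (dM : m11* m22 - m12* m21 != 0) (dN : n11* n22 - n12* n21 != 0) : p = q \/ p = q^-1.
Proof.
case: (eqVneq q 1) => [q1|qn1].
  subst q; left; apply: (q1_case E1 _ dM dN).
  by apply: (lc2 1 (-1) F3 E3); ring.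
have qn1' : 1 - q != 0 by rewrite subr_eq0 eq_sym.
have k1 : m12 * n22 = 0.
  by apply: (prod0 _ qn1'); apply: (lc2 (-1) 1 E1 F2); ring.
have k2 : m22 * n12 = 0.
  by apply: (prod0 _ qn1'); apply: (lc2 (-1) 1 E2 F1); ring.
have k3 : m11 * n21 = 0 by rewrite E1 k1.
have k4 : m21 * n11 = 0 by rewrite E2 k2.
case: (eqVneq m12 0) => [m12z|m12nz].
  have m11nz : m11 != 0 by apply: contraNneq dM => ->; rewrite m12z; apply/eqP; ring.
  have m22nz : m22 != 0 by apply: contraNneq dM => ->; rewrite m12z; apply/eqP; ring.
  have n21z := prod0 k3 m11nz; have n12z := prod0 k2 m22nz.
  have n11nz : n11 != 0 by apply: contraNneq dN => ->; rewrite n12z; apply/eqP; ring.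
  have m21z := prod0' k4 n11nz.
  left; apply/eqP; rewrite -subr_eq0; apply/eqP.
  have m11n11 : m11 * n11 != 0 by rewrite mulf_neq0.
  apply: (prod0' _ m11n11).
  by apply: (lc2 1 (-q) F3 E3); rewrite m12z n21z n12z m21z; ring.
have n22z := prod0 k1 m12nz.
have n12nz : n12 != 0 by apply: contraNneq dN => ->; rewrite n22z; apply/eqP; ring.
have n21nz : n21 != 0 by apply: contraNneq dN => ->; rewrite n22z; apply/eqP; ring.
have m22z := prod0' k2 n12nz; have m11z := prod0' k3 n21nz.
have m21nz : m21 != 0 by apply: contraNneq dM => ->; rewrite m22z; apply/eqP; ring.
have n11z := prod0 k4 m21nz.
right; apply: inv_of hq _.
have mn : m12 * n12 != 0 by rewrite mulf_neq0.
apply/eqP; rewrite eq_sym -subr_eq0; apply/eqP.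
apply: (prod0' _ mn).
by apply: (lc2 1 (-1) F3 E3); rewrite m22z m11z n11z n22z; ring.
Qed.

Lemma final2 (m11 m21 m12 m22 n11 n21 n12 n22 : K) (hq : q != 0)
 (E1 : m11* n21 = m12* n22) (E2 : m21* n11 = m22* n12)
 (E3 : p*(m11* n11) + m21* n21 = p*(m12* n12) + m22* n22)
 (F1 : n11* m21 = q*(n12* m22)) (F2 : n21* m11 = q*(n22* m12))
 (F3 : n11* m11 + n21* m21 = q*(n12* m12 + n22* m22))
 (dM : m11* m22 - m12* m21 != 0) (dN : n11* n22 - n12* n21 != 0) : p = q \/ p = q^-1.
Proof.
case: (eqVneq q 1) => [q1|qn1].
  subst q; left; apply: (q1_case E1 _ dM dN).
  by apply: (lc2 1 (-1) E3 F3); ring.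
have qn1' : 1 - q != 0 by rewrite subr_eq0 eq_sym.
have k1 : m12 * n22 = 0.
  by apply: (prod0 _ qn1'); apply: (lc2 (-1) 1 E1 F2); ring.
have k2 : m22 * n12 = 0.
  by apply: (prod0 _ qn1'); apply: (lc2 (-1) 1 E2 F1); ring.
have k3 : m11 * n21 = 0 by rewrite E1 k1.
have k4 : m21 * n11 = 0 by rewrite E2 k2.
case: (eqVneq m12 0) => [m12z|m12nz].
  have m11nz : m11 != 0 by apply: contraNneq dM => ->; rewrite m12z; apply/eqP; ring.
  have m22nz : m22 != 0 by apply: contraNneq dM => ->; rewrite m12z; apply/eqP; ring.
  have n21z := prod0 k3 m11nz; have n12z := prod0 k2 m22nz.
  have n11nz : n11 != 0 by apply: contraNneq dN => ->; rewrite n12z; apply/eqP; ring.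
  have n22nz : n22 != 0 by apply: contraNneq dN => ->; rewrite n12z; apply/eqP; ring.
  have m21z := prod0' k4 n11nz.
  right; apply: inv_of hq _.
  have mn : m22 * n22 != 0 by rewrite mulf_neq0.
  apply/eqP; rewrite eq_sym -subr_eq0; apply/eqP.
  apply: (prod0' _ mn).
  by apply: (lc2 (-1) p E3 F3); rewrite m12z n21z n12z m21z; ring.
have n22z := prod0 k1 m12nz.
have n12nz : n12 != 0 by apply: contraNneq dN => ->; rewrite n22z; apply/eqP; ring.
have n21nz : n21 != 0 by apply: contraNneq dN => ->; rewrite n22z; apply/eqP; ring.
have m22z := prod0' k2 n12nz; have m11z := prod0' k3 n21nz.
have m21nz : m21 != 0 by apply: contraNneq dM => ->; rewrite m22z; apply/eqP; ring.
have n11z := prod0 k4 m21nz.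
left; apply/eqP; rewrite -subr_eq0; apply/eqP.
have mn : m12 * n12 != 0 by rewrite mulf_neq0.
apply: (prod0' _ mn).
by apply: (lc2 (-1) 1 E3 F3); rewrite m22z m11z n11z n22z; ring.
Qed.

End Fin.

Section Gen.
Variable K : fieldType.

Lemma rels_morph (q : K) (A C : algType K) (f : {lrmorphism A -> C}) e1 e2 a b c d :
  Aq_rels q e1 e2 a b c d -> Aq_rels q (f e1) (f e2) (f a) (f b) (f c) (f d).
Proof.
case=> [[h1 h2 h3 h4 h5] [[h6 h7 h8 h9] [h10 h11]]].
split; [split|split; [split|split]];
  rewrite -?rmorphM -?rmorphD -?linearZ /= ?h1 ?h2 ?h3 ?h4 ?h5 ?h10 ?h11 ?rmorph1 ?rmorph0 //.
- by rewrite {1}h6.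
- by rewrite {1}h7.
- by rewrite {1}h8.
- by rewrite {1}h9.
Qed.

Lemma uniq_morph (q : K) (A C : algType K) e1 e2 a b c d
  (H : is_Aq q e1 e2 a b c d) (g1 g2 : {lrmorphism A -> C}) :
  g1 e1 = g2 e1 -> g1 e2 = g2 e2 -> g1 a = g2 a -> g1 b = g2 b ->
  g1 c = g2 c -> g1 d = g2 d -> g1 =1 g2.
Proof.
move=> y1 y2 ya yb yc yd.
have [f [_ fU]] := H.2 C _ _ _ _ _ _ (rels_morph g1 H.1).
have E1 := fU g1 (conj (And3 erefl erefl erefl) (And3 erefl erefl erefl)).
have E2 := fU g2 (conj (And3 (esym y1) (esym y2) (esym ya)) (And3 (esym yb) (esym yc) (esym yd))).
by move=> x; rewrite E1 E2.
Qed.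

Lemma iso_of (q r : K) (A B : algType K) e1 e2 a b c d e1' e2' a' b' c' d'
  (HA : is_Aq q e1 e2 a b c d) (HB : is_Aq r e1' e2' a' b' c' d')
  (f : {lrmorphism A -> B}) (g : {lrmorphism B -> A}) :
  g (f e1) = e1 -> g (f e2) = e2 -> g (f a) = a -> g (f b) = b -> g (f c) = c -> g (f d) = d ->
  f (g e1') = e1' -> f (g e2') = e2' -> f (g a') = a' -> f (g b') = b' -> f (g c') = c' -> f (g d') = d' ->
  alg_iso A B.
Proof.
move=> h1 h2 h3 h4 h5 h6 k1 k2 k3 k4 k5 k6.
exists f; exists g.
  by move=> x; apply: (uniq_morph HA (g1 := g \o f) (g2 := idfun)).
by move=> x; apply: (uniq_morph HB (g1 := f \o g) (g2 := idfun)).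
Qed.

End Gen.

Section Hard.
Variables (K : fieldType) (p q : K).
Local Notation T := (TT p).

Ltac unfH H := rewrite ?addTE ?zeroTE ?oppTE ?scaleTE ?mulTE ?oneTE /= ?/addT ?/oppT ?/scaleT ?/mulT ?/map2T ?/mapT ?/zeroT ?/oneT /= in H.

Lemma eqz (c : K) {x y z : K} : x = y -> z = c * (x - y) -> z = 0.
Proof. by move=> -> ->; rewrite subrr mulr0. Qed.
Arguments eqz c {x y z}.
Lemma eq_tr {x y u v : K} : x = y -> u - v = x - y -> u = v.
Proof. by move=> -> /eqP; rewrite subrr subr_eq0 => /eqP. Qed.
Lemma idem01 (x : K) : x * x = x -> x = 0 \/ x = 1.
Proof.
move=> h; have : x * (x - 1) = 0 by rewrite mulrBr mulr1 h subrr.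
by move/eqP; rewrite mulf_eq0 subr_eq0 => /orP[/eqP|/eqP]; [left|right].
Qed.
Lemma det_of (m11 m21 m12 m22 : K) :
  (forall la lc, la * m11 + lc * m21 = 0 -> la * m12 + lc * m22 = 0 -> la = 0 /\ lc = 0) ->
  m11 * m22 - m12 * m21 != 0.
Proof.
move=> H; apply/negP => /eqP d.
have [h1 h2] : m21 = 0 /\ - m11 = 0.
  by apply: H; [ring | apply: (eqz (-1) d); ring].
have m11z : m11 = 0 by rewrite -[m11]opprK h2 oppr0.
have [h3 h4] : m22 = 0 /\ - m12 = 0.
  by apply: H; [apply: (eqz 1 d); ring | ring].
have m12z : m12 = 0 by rewrite -[m12]opprK h4 oppr0.
have [] : (1 : K) = 0 /\ (0 : K) = 0 by apply: H; rewrite ?h1 ?h3 ?m11z ?m12z; ring.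
by move/eqP; rewrite oner_eq0.
Qed.

Ltac zc c f H := let n := fresh in have n := congr1 f H; unfH n; apply: (eqz c n); ring.
Ltac tr f H := let n := fresh in have n := congr1 f H; unfH n; apply: (eq_tr n); ring.

Lemma core (hq : q != 0) (E1 E2 Xa Xb Xc Xd : T) :
 Aq_rels q E1 E2 Xa Xb Xc Xd ->
 (forall la lc be, Lac la lc be E1 = 0 -> Lac la lc be E2 = 0 -> Lac la lc be Xa = 0 ->
    Lac la lc be Xb = 0 -> Lac la lc be Xc = 0 -> Lac la lc be Xd = 0 -> la = 0 /\ lc = 0) ->
 (forall la lc be, Lbd la lc be E1 = 0 -> Lbd la lc be E2 = 0 -> Lbd la lc be Xa = 0 ->
    Lbd la lc be Xb = 0 -> Lbd la lc be Xc = 0 -> Lbd la lc be Xd = 0 -> la = 0 /\ lc = 0) ->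
 p = q \/ p = q^-1.
Proof.
move=> [[h1 h2 h3 h4 h5] [[h6 h7 h8 h9] [h10 h11]]] kac kbd.
have hE2 : E2 = 1 - E1 by rewrite -h1 addrC addKr.
subst E2; clear h1 h3 h4 h5.
case: E1 h2 h6 h7 h8 h9 kac kbd => [σ1 σ2 ea ec eb ed ew1 ew2 ew3 ev1 ev2 ev3] h2 h6 h7 h8 h9 kac kbd.
case: Xa h6 h10 h11 kac kbd => [a1 a2 aa ac ab ad aw1 aw2 aw3 av1 av2 av3] h6 h10 h11 kac kbd.
case: Xb h8 h10 h11 kac kbd => [b1 b2 ba bc bb bd bw1 bw2 bw3 bv1 bv2 bv3] h8 h10 h11 kac kbd.
case: Xc h7 h10 h11 kac kbd => [c1 c2 ca cc cb cd cw1 cw2 cw3 cv1 cv2 cv3] h7 h10 h11 kac kbd.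
case: Xd h9 h10 h11 kac kbd => [d1 d2 da dc db dd dw1 dw2 dw3 dv1 dv2 dv3] h9 h10 h11 kac kbd.
have hs1 : σ1 * σ1 = σ1 by have := congr1 (@s1 K p) h2; unfT.
have hs2 : σ2 * σ2 = σ2 by have := congr1 (@s2 K p) h2; unfT.
case: (idem01 hs1) => es1; case: (idem01 hs2) => es2; subst σ1 σ2; clear hs1 hs2.
- have eaz : ea = 0 by zc (-1:K) (@xa K p) h2.
  subst ea.
  have aaz : aa = 0 by zc (1:K) (@xa K p) h6.
  have caz : ca = 0 by zc (1:K) (@xa K p) h7.
  have baz : ba = 0 by zc (1:K) (@xa K p) h8.
  have daz : da = 0 by zc (1:K) (@xa K p) h9.
  subst aa ca ba da.
  have [] : (1 : K) = 0 /\ (0 : K) = 0.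
    by apply: (kac 1 0 0); rewrite /Lac; unfT; ring.
  by move/eqP; rewrite oner_eq0.
-
  have a1z : a1 = 0 by zc (1:K) (@s1 K p) h6.
  have a2z : a2 = 0 by zc (1:K) (@s2 K p) h6.
  have aaz : aa = 0 by zc (1:K) (@xa K p) h6.
  have acz : ac = 0 by zc (1:K) (@xc K p) h6.
  have c1z : c1 = 0 by zc (1:K) (@s1 K p) h7.
  have c2z : c2 = 0 by zc (1:K) (@s2 K p) h7.
  have caz : ca = 0 by zc (1:K) (@xa K p) h7.
  have ccz : cc = 0 by zc (1:K) (@xc K p) h7.
  have b1z : b1 = 0 by zc (1:K) (@s1 K p) h8.
  have b2z : b2 = 0 by zc (1:K) (@s2 K p) h8.
  have bbz : bb = 0 by zc (1:K) (@xb K p) h8.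
  have bdz : bd = 0 by zc (1:K) (@xd K p) h8.
  have d1z : d1 = 0 by zc (1:K) (@s1 K p) h9.
  have d2z : d2 = 0 by zc (1:K) (@s2 K p) h9.
  have dbz : db = 0 by zc (1:K) (@xb K p) h9.
  have ddz : dd = 0 by zc (1:K) (@xd K p) h9.
  subst a1 a2 aa ac c1 c2 ca cc b1 b2 bb bd d1 d2 db dd.
  have dM : ab * cd - cb * ad != 0.
    apply: det_of => la lc e1 e2.
    apply: (kbd la lc (la * eb + lc * ed)); rewrite /Lbd; unfT; try ring.
      by apply: (eqz 1 e1); ring.
    by apply: (eqz 1 e2); ring.
  have dN : ba * dc - da * bc != 0.
    apply: det_of => la lc e1 e2.
    apply: (kac la lc (- (la * ea + lc * ec))); rewrite /Lac; unfT; try ring.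
      by apply: (eqz 1 e1); ring.
    by apply: (eqz 1 e2); ring.
  have E1 : ab * bc = cb * dc by tr (@v2 K p) h10.
  have E2 : ad * ba = cd * da by tr (@v3 K p) h10.
  have E3 : p * (ab * ba) + ad * bc = p * (cb * da) + cd * dc by tr (@v1 K p) h10.
  have F1 : ba * ad = q * (da * cd) by tr (@w2 K p) h11.
  have F2 : bc * ab = q * (dc * cb) by tr (@w3 K p) h11.
  have F3 : ba * ab + bc * ad = q * (da * cb + dc * cd) by tr (@w1 K p) h11.
  exact: (final2 hq E1 E2 E3 F1 F2 F3 dM dN).
-
  have a1z : a1 = 0 by zc (1:K) (@s1 K p) h6.
  have a2z : a2 = 0 by zc (1:K) (@s2 K p) h6.
  have abz : ab = 0 by zc (1:K) (@xb K p) h6.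
  have adz : ad = 0 by zc (1:K) (@xd K p) h6.
  have c1z : c1 = 0 by zc (1:K) (@s1 K p) h7.
  have c2z : c2 = 0 by zc (1:K) (@s2 K p) h7.
  have cbz : cb = 0 by zc (1:K) (@xb K p) h7.
  have cdz : cd = 0 by zc (1:K) (@xd K p) h7.
  have b1z : b1 = 0 by zc (1:K) (@s1 K p) h8.
  have b2z : b2 = 0 by zc (1:K) (@s2 K p) h8.
  have baz : ba = 0 by zc (1:K) (@xa K p) h8.
  have bcz : bc = 0 by zc (1:K) (@xc K p) h8.
  have d1z : d1 = 0 by zc (1:K) (@s1 K p) h9.
  have d2z : d2 = 0 by zc (1:K) (@s2 K p) h9.
  have daz : da = 0 by zc (1:K) (@xa K p) h9.
  have dcz : dc = 0 by zc (1:K) (@xc K p) h9.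
  subst a1 a2 ab ad c1 c2 cb cd b1 b2 ba bc d1 d2 da dc.
  have dM : aa * cc - ca * ac != 0.
    apply: det_of => la lc e1 e2.
    apply: (kac la lc (la * ea + lc * ec)); rewrite /Lac; unfT; try ring.
      by apply: (eqz 1 e1); ring.
    by apply: (eqz 1 e2); ring.
  have dN : bb * dd - db * bd != 0.
    apply: det_of => la lc e1 e2.
    apply: (kbd la lc (- (la * eb + lc * ed))); rewrite /Lbd; unfT; try ring.
      by apply: (eqz 1 e1); ring.
    by apply: (eqz 1 e2); ring.
  have E1 : aa * bd = ca * dd by tr (@w2 K p) h10.
  have E2 : ac * bb = cc * db by tr (@w3 K p) h10.
  have E3 : aa * bb + ac * bd = ca * db + cc * dd by tr (@w1 K p) h10.
  have F1 : bb * ac = q * (db * cc) by tr (@v2 K p) h11.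
  have F2 : bd * aa = q * (dd * ca) by tr (@v3 K p) h11.
  have F3 : p * (bb * aa) + bd * ac = q * (p * (db * ca) + dd * cc) by tr (@v1 K p) h11.
  exact: (final1 hq E1 E2 E3 F1 F2 F3 dM dN).
- have eaz : ea = 0 by zc (1:K) (@xa K p) h2.
  subst ea.
  have aaz : aa = 0 by zc (1:K) (@xa K p) h6.
  have caz : ca = 0 by zc (1:K) (@xa K p) h7.
  have baz : ba = 0 by zc (1:K) (@xa K p) h8.
  have daz : da = 0 by zc (1:K) (@xa K p) h9.
  subst aa ca ba da.
  have [] : (1 : K) = 0 /\ (0 : K) = 0.
    by apply: (kac 1 0 0); rewrite /Lac; unfT; ring.
  by move/eqP; rewrite oner_eq0.
Qed.

End Hard.
Arguments eqz {K} c {x y z}.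

Section Fin2.
Variables (K : fieldType) (p q : K).
Local Notation T := (TT p).


Definition E1T : T := Mk 1 0 0 0 0 0 0 0 0 0 0 0.
Definition E2T : T := Mk 0 1 0 0 0 0 0 0 0 0 0 0.
Definition aT : T := Mk 0 0 1 0 0 0 0 0 0 0 0 0.
Definition cT : T := Mk 0 0 0 1 0 0 0 0 0 0 0 0.
Definition bT : T := Mk 0 0 0 0 1 0 0 0 0 0 0 0.
Definition dT : T := Mk 0 0 0 0 0 1 0 0 0 0 0 0.

Lemma relsT : Aq_rels p E1T E2T aT bT cT dT.
Proof.
by split; [split|split; [split|split]]; rewrite /E1T /E2T /aT /bT /cT /dT; unfT; apply: MkE; ring.
Qed.

Lemma surjT (A : algType K) (e1 e2 a b c d : A) (rho : {lrmorphism A -> T}) :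
  rho e1 = E1T -> rho e2 = E2T -> rho a = aT -> rho b = bT -> rho c = cT -> rho d = dT ->
  forall t, exists x, rho x = t.
Proof.
move=> r1 r2 ra rb rc rd t.
exists (s1 t *: e1 + s2 t *: e2 + xa t *: a + xc t *: c + xb t *: b + xd t *: d
  + w1 t *: (a * b) + w2 t *: (a * d) + w3 t *: (c * b)
  + v1 t *: (d * c) + v2 t *: (b * c) + v3 t *: (d * a)).
have hab : rho (a * b) = aT * bT by rewrite rmorphM -ra -rb.
have had : rho (a * d) = aT * dT by rewrite rmorphM -ra -rd.
have hcb : rho (c * b) = cT * bT by rewrite rmorphM -rc -rb.
have hdc : rho (d * c) = dT * cT by rewrite rmorphM -rd -rc.
have hbc : rho (b * c) = bT * cT by rewrite rmorphM -rb -rc.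
have hda : rho (d * a) = dT * aT by rewrite rmorphM -rd -ra.
rewrite !linearD !linearZ /= hab had hcb hdc hbc hda r1 r2 ra rb rc rd.
apply: TT_ext; rewrite ?addTE ?scaleTE ?mulTE /E1T /E2T /aT /bT /cT /dT /=; ring.
Qed.

Lemma Lac0 (t : T) : Lac 0 0 0 t = 0. Proof. by rewrite /Lac; ring. Qed.
Lemma Lbd0 (t : T) : Lbd 0 0 0 t = 0. Proof. by rewrite /Lbd; ring. Qed.

Lemma kill_ac (A : algType K) (e1 e2 a b c d : A) (HA : is_Aq q e1 e2 a b c d)
  (psi : {lrmorphism A -> T}) (psurj : forall t, exists x, psi x = t) la lc be :
  Lac la lc be (psi e1) = 0 -> Lac la lc be (psi e2) = 0 -> Lac la lc be (psi a) = 0 ->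
  Lac la lc be (psi b) = 0 -> Lac la lc be (psi c) = 0 -> Lac la lc be (psi d) = 0 ->
  la = 0 /\ lc = 0.
Proof.
move=> k1 k2 k3 k4 k5 k6.
have E := uniq_morph HA (g1 := @Dac K p la lc be \o psi) (g2 := @Dac K p 0 0 0 \o psi).
have {}E : forall x, Dac la lc be (psi x) = Dac 0 0 0 (psi x).
  by apply: E; rewrite /= /Dac Lac0 ?k1 ?k2 ?k3 ?k4 ?k5 ?k6.
have [x hx] := psurj aT; have [y hy] := psurj cT.
have := congr1 (@xa K p) (E x); have := congr1 (@xa K p) (E y).
rewrite /= hx hy /Dac /= !Lac0 /Lac /aT /cT /= => h1 h2.
split; [apply: (eqz 1 h2) | apply: (eqz 1 h1)]; ring.
Qed.

Lemma kill_bd (A : algType K) (e1 e2 a b c d : A) (HA : is_Aq q e1 e2 a b c d)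
  (psi : {lrmorphism A -> T}) (psurj : forall t, exists x, psi x = t) la lc be :
  Lbd la lc be (psi e1) = 0 -> Lbd la lc be (psi e2) = 0 -> Lbd la lc be (psi a) = 0 ->
  Lbd la lc be (psi b) = 0 -> Lbd la lc be (psi c) = 0 -> Lbd la lc be (psi d) = 0 ->
  la = 0 /\ lc = 0.
Proof.
move=> k1 k2 k3 k4 k5 k6.
have E := uniq_morph HA (g1 := @Dbd K p la lc be \o psi) (g2 := @Dbd K p 0 0 0 \o psi).
have {}E : forall x, Dbd la lc be (psi x) = Dbd 0 0 0 (psi x).
  by apply: E; rewrite /= /Dbd Lbd0 ?k1 ?k2 ?k3 ?k4 ?k5 ?k6.
have [x hx] := psurj bT; have [y hy] := psurj dT.
have := congr1 (@xb K p) (E x); have := congr1 (@xb K p) (E y).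
rewrite /= hx hy /Dbd /= !Lbd0 /Lbd /bT /dT /= => h1 h2.
split; [apply: (eqz 1 h2) | apply: (eqz 1 h1)]; ring.
Qed.

End Fin2.

Lemma swap_rels (K : fieldType) (r s : K) (A : algType K) (e1 e2 a b c d : A) :
  s * r = 1 -> Aq_rels r e1 e2 a b c d -> Aq_rels s e1 e2 c d a b.
Proof.
move=> hsr [hi [[h6 h7 h8 h9] [h10 h11]]].
split=> //; split=> //; split=> //.
by rewrite h11 scalerA hsr scale1r.
Qed.

Arguments swap_rels {K r s A e1 e2 a b c d}.

Unset Implicit Arguments. Set Strict Implicit.

Theorem proposition3p7 (K : closedFieldType) (hchar : [pchar K] =i pred0)
    (p q : K) (hp : p != 0) (hq : q != 0)
    (Ap : algType K) (p1 p2 pa pb pc pd : Ap)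
    (Aq : algType K) (q1 q2 qa qb qc qd : Aq) :
  is_Aq p p1 p2 pa pb pc pd ->
  is_Aq q q1 q2 qa qb qc qd ->
  (alg_iso Aq Ap <-> (p = q \/ p = q^-1)).
Proof.
move=> Hp Hq; split.
  case=> phi [g phiK gK].
  have [rho [[[r1 r2 ra] [rb rc rd]] _]] := Hp.2 (TT p) _ _ _ _ _ _ (relsT p).
  have rsurj := surjT r1 r2 ra rb rc rd.
  pose psi : {lrmorphism Aq -> TT p} := rho \o phi.
  have psurj : forall t, exists x, psi x = t.
    by move=> t; have [y hy] := rsurj t; exists (g y); rewrite /psi /= gK.
  exact: (core hq (rels_morph psi Hq.1) (kill_ac Hq psurj) (kill_bd Hq psurj)).
case=> hpq.
  subst p.
  have [f [[[f1 f2 fa] [fb fc fd]] _]] := Hq.2 Ap _ _ _ _ _ _ Hp.1.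
  have [g [[[g1 g2 ga] [gb gc gd]] _]] := Hp.2 Aq _ _ _ _ _ _ Hq.1.
  apply: (iso_of Hq Hp (f := f) (g := g));
    by rewrite ?f1 ?f2 ?fa ?fb ?fc ?fd ?g1 ?g2 ?ga ?gb ?gc ?gd.
subst p.
have [f [[[f1 f2 fa] [fb fc fd]] _]] :=
  Hq.2 Ap _ _ _ _ _ _ (swap_rels (mulfV hq) Hp.1).
have [g [[[g1 g2 ga] [gb gc gd]] _]] :=
  Hp.2 Aq _ _ _ _ _ _ (swap_rels (mulVf hq) Hq.1).
apply: (iso_of Hq Hp (f := f) (g := g));
  by rewrite ?f1 ?f2 ?fa ?fb ?fc ?fd ?g1 ?g2 ?ga ?gb ?gc ?gd.
Qed.
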